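(* Let $\mu\in\mathcal{P}(\mathcal{X})$, $0<m_1\le m_2<\infty$, and tail functions $\alpha,\tilde\alpha$ with $\mu(B_{m_1})>0$ and $\alpha(r)>0$ for all $r>0$. Define \[ \tilde\beta(r):=\frac{1}{\mu(B_{m_1})}\sup_{a\ge r}\frac{\mu(B_a^{\mathsf c})}{\alpha(a)\wedge1}\ (r\ge m_1),\qquad \beta(r):=\frac{1}{\mu(B_{m_1})}\Big(\sup_{a\ge r}\frac{\mu(B_a^{\mathsf c})}{\tilde\alpha(a)}+\mu(B_r^{\mathsf c})\Big)\ (r\ge m_2). \] (i) For every $g\in\mathcal{G}^{\mu}_{\alpha,\tilde\alpha}$: $\int_{B_r^{\mathsf c}}g_-\,d\mu\le\tilde\beta(r)\int_{B_{m_1}}g\,d\mu$ for all $r\ge m_1$, and $\int_{B_r^{\mathsf c}}g_+\,d\mu\le\beta(r)\int_{B_{m_1}}g\,d\mu$ for all $r\ge m_2$. (ii) For every $f\in\mathcal{F}^{\mu,norm}_{\alpha,\tilde\alpha}$ and $g\in\mathcal{G}^{\mu,norm}_{\alpha,\tilde\alpha}$: \[ \int_{B_r^{\mathsf c}}|f|\,d\mu\le\alpha(r)+\tilde\alpha(r)\ (r\ge m_2),\qquad \int|f|\,d\mu\le1+2\tilde\alpha(m_2), \] \[ \int_{B_r^{\mathsf c}}|g|\,d\mu\le\frac{\tilde\beta(r)+\beta(r)}{1-\tilde\beta(m_1)}\ (r\ge m_2),\qquad \int|g|\,d\mu\le1+2\frac{\tilde\beta(m_1)}{1-\tilde\beta(m_1)}.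 \]
   Context: $\mathcal{X}$ is a Polish space with metric $d_{\mathcal{X}}$, $x_0$ fixed, $B_r=\{x:d_{\mathcal{X}}(x_0,x)\le r\}$, $B_r^{\mathsf c}=\mathcal{X}\setminus B_r$; $a\wedge b=\min\{a,b\}$; $f_+=\max\{f,0\}$, $f_-=-\min\{f,0\}$. A tail function is a non-increasing $\alpha:(0,\infty)\to[0,\infty)$ with $\lim_{r\to\infty}\alpha(r)=0$. $\mathcal{F}^{\mu}_{\alpha,\tilde\alpha}$ is the set of $f\in L^2(\mu)$ with $f\mathbf 1_{B_{m_2}}\ge0$ $\mu$-a.s., $\int_{B_r^{\mathsf c}}f_+\,d\mu\le\alpha(r)\int f\,d\mu$ for all $r\ge m_1$, $\int_{B_r^{\mathsf c}}f_-\,d\mu\le\tilde\alpha(r)\int f\,d\mu$ for all $r\ge m_2$; $\mathcal{G}^{\mu}_{\alpha,\tilde\alpha}=\{g\in L^2(\mu):\int fg\,d\mu\ge0\ \forall f\in\mathcal{F}^{\mu}_{\alpha,\tilde\alpha}\}$. $\mathcal{F}^{\mu,norm}_{\alpha,\tilde\alpha}=\{f\in\mathcal{F}^{\mu}_{\alpha,\tilde\alpha}:\int f\,d\mu=1\}$ and $\mathcal{G}^{\mu,norm}_{\alpha,\tilde\alpha}=\{g\in\mathcal{G}^{\mu}_{\alpha,\tilde\alpha}:\int g\,d\mu=1\}$. *)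

(* Defs.v *)
From HB Require Import structures.
From mathcomp Require Import all_boot all_order all_algebra.
From mathcomp Require Import all_classical all_reals all_analysis.
Set Implicit Arguments. Unset Strict Implicit. Unset Printing Implicit Defensive.
Import Order.TTheory GRing.Theory Num.Theory.
Import numFieldNormedType.Exports.
Local Open Scope classical_set_scope.
Local Open Scope ring_scope.

Section Defs.
Context {R : realType} {dsp : measure_display} {X : measurableType dsp}.

Definition is_metric (dist : X -> X -> R) : Prop :=
  [/\ forall x y, 0 <= dist x y,
      forall x y, dist x y = 0 <-> x = y,
      forall x y, dist x y = dist y x &
      forall x y z, dist x z <= dist x y + dist y z].

Definition metric_open (dist : X -> X -> R) (U : set X) : Prop :=
  forall x, U x -> exists2 e : R, 0 < e & [set y | dist x y < e] `<=` U.

Definition metric_complete (dist : X -> X -> R) : Prop :=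
  forall u : nat -> X,
    (forall e : R, 0 < e -> exists N : nat, forall n m, (N <= n)%N -> (N <= m)%N ->
        dist (u n) (u m) < e) ->
    exists l : X, forall e : R, 0 < e -> exists N : nat, forall n, (N <= n)%N ->
        dist (u n) l < e.

Definition metric_separable (dist : X -> X -> R) : Prop :=
  exists D : set X, countable D /\
    forall x (e : R), 0 < e -> exists2 y, D y & dist x y < e.

Definition polish_borel (dist : X -> X -> R) : Prop :=
  [/\ is_metric dist, metric_complete dist, metric_separable dist &
      (@measurable dsp X) = <<s [set U | metric_open dist U] >>].

Definition cball (dist : X -> X -> R) (x0 : X) (r : R) : set X :=
  [set x | dist x0 x <= r].

Definition tail_function (a : R -> R) : Prop :=
  [/\ (forall r s, 0 < r -> r <= s -> a s <= a r),
      (forall r, 0 < r -> 0 <= a r) &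
      a x @[x --> +oo] --> (0 : R)].

Definition fpos (f : X -> R) : X -> R := fun x => Num.max (f x) 0.
Definition fneg (f : X -> R) : X -> R := fun x => - Num.min (f x) 0.

Local Open Scope ereal_scope.

(** L^2(mu) (as functions; statements below are a.e.-invariant) *)
Definition L2 (mu : {measure set X -> \bar R}) (f : X -> R) : Prop :=
  measurable_fun setT f /\ \int[mu]_x (((f x) ^+ 2)%R)%:E < +oo.

Definition eint (mu : {measure set X -> \bar R}) (A : set X) (f : X -> R) : \bar R :=
  \int[mu]_(x in A) (f x)%:E.

Definition Fclass (dist : X -> X -> R) (x0 : X) (mu : {measure set X -> \bar R})
    (m1 m2 : R) (alpha alphat : R -> R) (f : X -> R) : Prop :=
  [/\ L2 mu f,
      {ae mu, forall x, cball dist x0 m2 x -> (0 <= f x)%R},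
      (forall r, (m1 <= r)%R ->
         eint mu (~` cball dist x0 r) (fpos f) <= (alpha r)%:E * eint mu setT f) &
      (forall r, (m2 <= r)%R ->
         eint mu (~` cball dist x0 r) (fneg f) <= (alphat r)%:E * eint mu setT f)].

Definition Gclass (dist : X -> X -> R) (x0 : X) (mu : {measure set X -> \bar R})
    (m1 m2 : R) (alpha alphat : R -> R) (g : X -> R) : Prop :=
  L2 mu g /\
  forall f, Fclass dist x0 mu m1 m2 alpha alphat f ->
    0 <= \int[mu]_x ((f x * g x)%R)%:E.

Definition Fnorm dist x0 mu m1 m2 alpha alphat (f : X -> R) : Prop :=
  Fclass dist x0 mu m1 m2 alpha alphat f /\ eint mu setT f = 1.

Definition Gnorm dist x0 mu m1 m2 alpha alphat (g : X -> R) : Prop :=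
  Gclass dist x0 mu m1 m2 alpha alphat g /\ eint mu setT g = 1.

(** extended-real quotient x / y for x >= 0, y >= 0 real, with the
    conventions c/0 = +oo for c > 0 and 0/0 = 0 *)
Definition equot (x : \bar R) (y : R) : \bar R :=
  if y == 0%R then (if x == 0 then 0 else +oo) else x * (y^-1)%:E.

Definition betat (dist : X -> X -> R) (x0 : X) (mu : {measure set X -> \bar R})
    (m1 : R) (alpha : R -> R) (r : R) : \bar R :=
  ((fine (mu (cball dist x0 m1)))^-1)%:E *
  ereal_sup [set y | exists2 a, (r <= a)%R &
                       y = equot (mu (~` cball dist x0 a)) (Num.min (alpha a) 1%R)].

Definition beta (dist : X -> X -> R) (x0 : X) (mu : {measure set X -> \bar R})
    (m1 : R) (alphat : R -> R) (r : R) : \bar R :=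
  ((fine (mu (cball dist x0 m1)))^-1)%:E *
  (ereal_sup [set y | exists2 a, (r <= a)%R &
                       y = equot (mu (~` cball dist x0 a)) (alphat a)]
   + mu (~` cball dist x0 r)).

End Defs.

(* Main.v *)
Require Import Defs.
From HB Require Import structures.
From mathcomp Require Import all_boot all_order all_algebra.
From mathcomp Require Import all_classical all_reals all_analysis.
From mathcomp Require Import ring lra measurable_realfun.
Import Order.TTheory GRing.Theory Num.Theory.
Set Implicit Arguments. Unset Strict Implicit. Unset Printing Implicit Defensive.
Import numFieldNormedType.Exports.
Local Open Scope classical_set_scope.
Local Open Scope ring_scope.

Section H.
Context {R : realType} {dsp : measure_display} {X : measurableType dsp}.
Context (mu : probability X R).

Definition Int (h : X -> R) : Prop := mu.-integrable setT (EFin \o h).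
Definition RI (D : set X) (h : X -> R) : R :=
  Rintegral mu setT (fun x => \1_D x * h x).

Lemma cball_meas (dist : X -> X -> R) x0 r :
  polish_borel dist -> measurable (cball dist x0 r).
Proof.
case=> [[d0 _ dsym dtri] _ _ hm].
rewrite -(setCK (cball dist x0 r)); apply: measurableC.
rewrite hm; apply: sub_sigma_algebra => x /= /negP; rewrite -ltNge => hx.
exists (dist x0 x - r); first by rewrite subr_gt0.
move=> y /= hy; apply/negP; rewrite -ltNge.
have := dtri x0 y x; rewrite (dsym y x); lra.
Qed.

Lemma bounded_Int (h : X -> R) (K : R) : measurable_fun setT h -> (forall x, `|h x| <= K) -> Int h.
Proof.
move=> mh hK; apply: (@le_integrable _ _ _ mu setT measurableT (EFin \o h) (EFin \o cst K)).
- exact/measurable_EFinP.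
- move=> x _ /=; rewrite lee_fin.
  by apply: le_trans (hK x) _; apply: ler_norm.
- exact: finite_measure_integrable_cst.
Qed.


Lemma Int_meas (h : X -> R) : Int h -> measurable_fun setT h.
Proof. by case/integrableP => /measurable_EFinP. Qed.

Lemma L2_Int (g : X -> R) : L2 mu g -> Int g.
Proof.
case=> mg g2.
have i2 : Int (fun x => g x ^+ 2).
  apply/integrableP; split.
    by apply/measurable_EFinP; apply: measurable_funX.
  under eq_integral do rewrite /= ger0_norm ?sqr_ge0//.
  exact: g2.
apply: (@le_integrable _ _ _ mu setT measurableT (EFin \o g)
   (EFin \o (fun x => 1 + g x ^+ 2))).
- exact/measurable_EFinP.
- move=> x _ /=; rewrite lee_fin [X in _ <= X]ger0_norm; last first.
    by apply: addr_ge0 => //; apply: sqr_ge0.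
  rewrite -(real_normK (num_real (g x))); have := normr_ge0 (g x); nra.
- rewrite /comp; under eq_fun do rewrite EFinD.
  apply: (integrableD measurableT) => //.
  exact: (@finite_measure_integrable_cst _ _ _ mu setT 1 measurableT).
Qed.

Lemma Int_ind (D : set X) (h : X -> R) : measurable D -> Int h ->
  Int (fun x => \1_D x * h x).
Proof.
move=> mD ih.
apply: (@le_integrable _ _ _ mu setT measurableT _ (EFin \o h)) => //.
- apply/measurable_EFinP; apply: measurable_funM.
    exact/measurable_indicP.
  exact: Int_meas.
- move=> x _ /=; rewrite lee_fin normrM indicE.
  by case: (x \in D) => /=; rewrite ?normr1 ?mul1r ?normr0 ?mul0r.
Qed.

Lemma Int_fpos (h : X -> R) : Int h -> Int (fpos h).
Proof.
move=> ih.
apply: (@le_integrable _ _ _ mu setT measurableT _ (EFin \o h)) => //.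
- apply/measurable_EFinP; apply: measurable_maxr => //.
  exact: Int_meas.
- move=> x _ /=; rewrite lee_fin /fpos.
  by have [H|H] := leP (h x) 0; rewrite ?normr0 ?normr_ge0.
Qed.

Lemma Int_fneg (h : X -> R) : Int h -> Int (fneg h).
Proof.
move=> ih.
apply: (@le_integrable _ _ _ mu setT measurableT _ (EFin \o h)) => //.
- apply/measurable_EFinP; apply: measurableT_comp => //.
  apply: measurable_minr => //; exact: Int_meas.
- move=> x _ /=; rewrite lee_fin /fneg.
  by have [H|H] := leP (h x) 0; rewrite ?normrN ?oppr0 ?normr0 ?normr_ge0.
Qed.

Lemma eint_RI (D : set X) (h : X -> R) : measurable D -> Int h ->
  eint mu D h = (RI D h)%:E.
Proof.
move=> mD ih; rewrite /eint /RI /Rintegral integral_mkcond.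
have -> : ((fun x => (h x)%:E) \_ D) = (fun x => (\1_D x * h x)%:E).
  apply/funext => x; rewrite patchE indicE.
  by case: (x \in D) => /=; rewrite ?mul1r ?mul0r.
rewrite fineK //; apply: integrable_fin_num => //.
exact: Int_ind.
Qed.

Lemma RI_ind (A : set X) : measurable A ->
  Rintegral mu setT (\1_A) = fine (mu A).
Proof.
by move=> mA; rewrite /Rintegral integral_indic // setIT.
Qed.

Lemma muE (A : set X) : measurable A -> mu A = (fine (mu A))%:E.
Proof. by move=> mA; rewrite fineK // fin_num_measure. Qed.


Lemma ind1 (D : set X) x : D x -> \1_D x = 1 :> R.
Proof. by move=> Dx; rewrite indicE mem_set. Qed.

Lemma ind0 (D : set X) x : ~ D x -> \1_D x = 0 :> R.
Proof. by move=> Dx; rewrite indicE memNset. Qed.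

Lemma ind01 (D : set X) x : 0 <= \1_D x :> R /\ \1_D x <= 1 :> R.
Proof. by rewrite indicE; case: (x \in D). Qed.

Lemma Int_scale (k : X -> R) (t : R) : Int k -> Int (fun x => t * k x).
Proof.
move=> ik; rewrite /Int.
apply: (@eq_integrable _ _ _ mu setT measurableT _ _ _ (integrableZl measurableT t ik)) => x _ /=.
by rewrite EFinM.
Qed.

Lemma Int_add (f g : X -> R) : Int f -> Int g -> Int (fun x => f x + g x).
Proof.
move=> i1 i2; rewrite /Int.
apply: (@eq_integrable _ _ _ mu setT measurableT _ _ _ (integrableD measurableT i1 i2)) => x _ /=.
by rewrite EFinD.
Qed.

Lemma Int_sub (f g : X -> R) : Int f -> Int g -> Int (fun x => f x - g x).
Proof.
move=> i1 i2; rewrite /Int.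
apply: (@eq_integrable _ _ _ mu setT measurableT _ _ _ (integrableB measurableT i1 i2)) => x _ /=.
by rewrite EFinB.
Qed.

Lemma Int_indic (A : set X) : measurable A -> Int (\1_A).
Proof. move=> mA; exact: integrable_indic. Qed.

Lemma Rle (f1 f2 : X -> R) : Int f1 -> Int f2 -> (forall x, f1 x <= f2 x) ->
  Rintegral mu setT f1 <= Rintegral mu setT f2.
Proof. by move=> i1 i2 h; apply: le_Rintegral. Qed.

Lemma Rzero (f : X -> R) : (forall x, f x = 0) -> Rintegral mu setT f = 0.
Proof.
move=> h; rewrite (@eq_Rintegral _ _ _ mu setT (fun=> 0)); last by move=> x _; rewrite h.
by rewrite Rintegral_cst // mul0r.
Qed.

Lemma Rext (f g : X -> R) : (forall x, f x = g x) ->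
  Rintegral mu setT f = Rintegral mu setT g.
Proof. by move=> h; apply: eq_Rintegral => x _; rewrite h. Qed.

Lemma RD (f g : X -> R) : Int f -> Int g ->
  Rintegral mu setT (fun x => f x + g x) = Rintegral mu setT f + Rintegral mu setT g.
Proof. by move=> i1 i2; rewrite RintegralD. Qed.

Lemma RB (f g : X -> R) : Int f -> Int g ->
  Rintegral mu setT (fun x => f x - g x) = Rintegral mu setT f - Rintegral mu setT g.
Proof. by move=> i1 i2; rewrite RintegralB. Qed.

Lemma RZ (f : X -> R) t : Int f ->
  Rintegral mu setT (fun x => t * f x) = t * Rintegral mu setT f.
Proof. by move=> i1; rewrite RintegralZl. Qed.

Lemma Rge0 (f : X -> R) : (forall x, 0 <= f x) -> 0 <= Rintegral mu setT f.
Proof. by move=> h; apply: Rintegral_ge0 => x _. Qed.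

Lemma fpos_ge0 (h : X -> R) x : 0 <= fpos h x.
Proof. by rewrite /fpos le_max lexx orbT. Qed.

Lemma fneg_ge0 (h : X -> R) x : 0 <= fneg h x.
Proof. by rewrite /fneg oppr_ge0 ge_min lexx orbT. Qed.

Lemma fpos_of_ge0 (h : X -> R) x : 0 <= h x -> fpos h x = h x.
Proof. by move=> H; rewrite /fpos max_l. Qed.

Lemma fpos_of_le0 (h : X -> R) x : h x <= 0 -> fpos h x = 0.
Proof. by move=> H; rewrite /fpos max_r. Qed.

Lemma fneg_of_ge0 (h : X -> R) x : 0 <= h x -> fneg h x = 0.
Proof. by move=> H; rewrite /fneg min_r ?oppr0. Qed.

Lemma fneg_of_le0 (h : X -> R) x : h x <= 0 -> fneg h x = - h x.
Proof. by move=> H; rewrite /fneg min_l. Qed.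

Lemma fposneg (h : X -> R) x : h x = fpos h x - fneg h x.
Proof.
have [H|H] := leP 0 (h x).
  by rewrite fpos_of_ge0 // fneg_of_ge0 // subr0.
by rewrite fpos_of_le0 ?ltW // fneg_of_le0 ?ltW // sub0r opprK.
Qed.

Lemma fabs (h : X -> R) x : `|h x| = fpos h x + fneg h x.
Proof.
have [H|H] := leP 0 (h x).
  by rewrite fpos_of_ge0 // fneg_of_ge0 // addr0 ger0_norm.
by rewrite fpos_of_le0 ?ltW // fneg_of_le0 ?ltW // add0r ltr0_norm.
Qed.


Lemma RT (h : X -> R) : RI setT h = Rintegral mu setT h.
Proof. by apply: Rext => x; rewrite ind1 // mul1r. Qed.

Lemma G_use dist x0 m1 m2 alpha alphat (g h : X -> R) :
  Gclass dist x0 mu m1 m2 alpha alphat g ->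
  Fclass dist x0 mu m1 m2 alpha alphat h -> Int (fun x => h x * g x) ->
  0 <= Rintegral mu setT (fun x => h x * g x).
Proof.
case=> _ /[apply] H ihg; rewrite -lee_fin /Rintegral fineK //.
exact: integrable_fin_num.
Qed.

Lemma Fclass_intro dist x0 m1 m2 alpha alphat (h : X -> R) (K : R) :
  polish_borel dist ->
  measurable_fun setT h -> (forall x, `|h x| <= K) ->
  (forall x, cball dist x0 m2 x -> 0 <= h x) ->
  (forall r, m1 <= r -> RI (~` cball dist x0 r) (fpos h) <= alpha r * RI setT h) ->
  (forall r, m2 <= r -> RI (~` cball dist x0 r) (fneg h) <= alphat r * RI setT h) ->
  Fclass dist x0 mu m1 m2 alpha alphat h.
Proof.
move=> pb mh hK hpos H1 H2.
have ih : Int h := @bounded_Int h K mh hK.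
have mB r : measurable (~` cball dist x0 r) by apply: measurableC; apply: cball_meas.
split.
- split => //.
  have i2 : Int (fun x => h x ^+ 2).
    apply: (@bounded_Int _ (K ^+ 2)); first by apply: measurable_funX.
    move=> x; rewrite normrX; have := normr_ge0 (h x); have := hK x; nra.
  case/integrableP: i2 => _ H.
  rewrite (eq_integral (fun x => `|((h x) ^+ 2)%:E|%E)) //.
  by move=> x _ /=; rewrite ger0_norm // sqr_ge0.
- by apply: aeW.
- move=> r hr; rewrite !eint_RI //; last exact: Int_fpos.
  by rewrite -EFinM lee_fin; apply: H1.
- move=> r hr; rewrite !eint_RI //; last exact: Int_fneg.
  by rewrite -EFinM lee_fin; apply: H2.
Qed.


Lemma real_fin (I J c p : R) : 0 < p -> 0 <= c -> 0 <= I ->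
  (forall t, 0 <= t -> t * c <= p -> t * I <= J) -> I <= c / p * J.
Proof.
move=> p0 c0 I0 H.
have J0 : 0 <= J by have := H 0 (lexx 0); rewrite !mul0r; apply; apply: ltW.
have [cz|cpos] := eqVneq c 0.
  subst c; rewrite mul0r mul0r.
  rewrite leNgt; apply/negP => Ipos.
  have t0 : 0 <= (J + 1) / I by apply: divr_ge0; lra.
  have := H ((J + 1) / I) t0; rewrite mulr0 divfK ?gt_eqF //.
  by move=> /(_ (ltW p0)); lra.
have cp : 0 < c by rewrite lt_neqAle eq_sym cpos c0.
have t0 : 0 <= p / c by apply: divr_ge0; apply: ltW.
have h1 := H (p / c) t0.
rewrite divfK ?gt_eqF // in h1.
have {h1} h1 := h1 (lexx p).
have -> : I = c / p * (p / c * I) by field; rewrite ?gt_eqF.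
by apply: ler_wpM2l => //; rewrite divr_ge0 ?ltW.
Qed.


Lemma meas_lt0 (g : X -> R) : measurable_fun setT g -> measurable [set x | g x < 0].
Proof.
move=> mg.
rewrite (_ : [set x | g x < 0] = g @^-1` `]-oo, 0[); last first.
  by apply/seteqP; split => x /=; rewrite in_itv.
by have := mg measurableT _ (measurable_itv `]-oo, 0[); rewrite setTI.
Qed.

Lemma meas_gt0 (g : X -> R) : measurable_fun setT g -> measurable [set x | 0 < g x].
Proof.
move=> mg.
rewrite (_ : [set x | 0 < g x] = g @^-1` `]0, +oo[); last first.
  by apply/seteqP; split => x /=; rewrite in_itv /= andbT.
by have := mg measurableT _ (measurable_itv `]0, +oo[); rewrite setTI.
Qed.

Lemma notB_max (dist : X -> X -> R) (x0 : X) (r s : R) (x : X) : ~ cball dist x0 r x -> ~ cball dist x0 s x ->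
  (~` cball dist x0 (Num.max r s)) x.
Proof.
rewrite /cball /= => h1 h2 H; rewrite le_max in H.
by case/orP: H => H; [apply: h1|apply: h2].
Qed.

Lemma B_mono (dist : X -> X -> R) (x0 : X) (a b : R) (x : X) : a <= b -> cball dist x0 a x -> cball dist x0 b x.
Proof. by rewrite /cball /= => ab hx; apply: le_trans hx ab. Qed.

Lemma neg_core (dist : X -> X -> R) (x0 : X) (m1 m2 : R) (alpha alphat : R -> R) (g : X -> R) (r c : R) :
  polish_borel dist -> 0 < m1 -> m1 <= m2 -> tail_function alpha -> tail_function alphat ->
  0 < fine (mu (cball dist x0 m1)) ->
  Gclass dist x0 mu m1 m2 alpha alphat g -> m1 <= r -> 0 <= c ->
  (forall a, r <= a -> fine (mu (~` cball dist x0 a)) <= c * alpha a) ->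
  RI (~` cball dist x0 r) (fneg g) <= c / fine (mu (cball dist x0 m1)) * RI (cball dist x0 m1) g.
Proof.
move=> pb m10 m12 [amon apos _] [tmon tpos _] p0 Gg hr c0 hc.
set B := cball dist x0; set p := fine (mu (B m1)).
have mB a : measurable (B a) by exact: cball_meas.
have mBc a : measurable (~` B a) by apply: measurableC.
have ig : Int g := L2_Int Gg.1.
have mg := Int_meas ig.
set A := ~` B r `&` [set x | g x < 0].
have mA : measurable A by apply: measurableI => //; exact: meas_lt0.
apply: real_fin => //.
  by apply: Rge0 => x; apply: mulr_ge0; [exact: (ind01 _ x).1 | exact: fneg_ge0].
move=> t t0 tc.
pose h := fun x => \1_(B m1) x + t * \1_A x.
have h0 x : 0 <= h x by rewrite /h; have := ind01 (B m1) x; have := ind01 A x; nra.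
have h1 x : h x <= 1 + t by rewrite /h; have := ind01 (B m1) x; have := ind01 A x; nra.
have ih : Int h by apply: Int_add; [exact: Int_indic | apply: Int_scale; exact: Int_indic].
have RIh : p <= RI setT h.
  rewrite RT /p -RI_ind //; apply: Rle => //; first exact: Int_indic.
  by move=> x; rewrite /h; have := ind01 A x; nra.
have Fh : Fclass dist x0 mu m1 m2 alpha alphat h.
  apply: (@Fclass_intro _ _ _ _ _ _ h (1 + t)) => //.
  - apply: measurable_funD; first exact/measurable_indicP.
    by apply: measurable_funM => //; exact/measurable_indicP.
  - by move=> x; rewrite ger0_norm.
  - move=> s hs.
    have s0 : 0 < s by lra.
    apply: (@le_trans _ _ (t * fine (mu (~` B (Num.max r s))))).
      rewrite -RI_ind // -RZ; last exact: Int_indic.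
      apply: Rle.
      + by apply: Int_ind => //; exact: Int_fpos.
      + by apply: Int_scale; exact: Int_indic.
      move=> x; case: (pselect (B s x)) => Bs.
        rewrite (@ind0 (~` B s)); last by move=> /(_ Bs).
        by rewrite mul0r; have := ind01 (~` B (Num.max r s)) x; nra.
      rewrite ind1 // mul1r.
      have nBm1 : ~ B m1 x by move=> H; apply: Bs; apply: B_mono H.
      rewrite fpos_of_ge0 // /h (ind0 nBm1) add0r.
      case: (pselect (A x)) => Ax.
        rewrite (ind1 Ax) mulr1 ind1 ?mulr1 //.
        by apply: notB_max => //; case: Ax.
      rewrite (ind0 Ax) mulr0.
      by apply: mulr_ge0 => //; exact: (ind01 _ x).1.
    have rm : r <= Num.max r s by rewrite le_max lexx.
    have sm : s <= Num.max r s by rewrite le_max lexx orbT.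
    have hmax := hc _ rm.
    have amax : alpha (Num.max r s) <= alpha s by apply: amon.
    have am0 : 0 <= alpha (Num.max r s) by apply: apos; lra.
    have e1 : t * fine (mu (~` B (Num.max r s))) <= t * (c * alpha (Num.max r s)).
      by apply: ler_wpM2l.
    have e2 : t * (c * alpha (Num.max r s)) <= t * c * alpha s.
      by rewrite mulrA; apply: ler_wpM2l => //; apply: mulr_ge0.
    have e3 : t * c * alpha s <= p * alpha s by apply: ler_wpM2r => //; lra.
    have e4 : p * alpha s <= alpha s * RI setT h.
      by rewrite mulrC; apply: ler_wpM2l => //; lra.
    lra.
  - move=> s hs.
    rewrite {1}/RI Rzero; last by move=> x; rewrite fneg_of_ge0 // mulr0.
    by apply: mulr_ge0; [apply: tpos; lra | have pp : 0 < p := p0; lra].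
have eqhg x : h x * g x = \1_(B m1) x * g x - t * (\1_(~` B r) x * fneg g x).
  rewrite /h; case: (pselect (A x)) => Ax.
    rewrite (ind1 Ax); case: Ax => Ax1 Ax2.
    rewrite (ind1 Ax1) fneg_of_le0 //; last by apply: ltW.
    by ring.
  rewrite (ind0 Ax).
  case: (pselect ((~` B r) x)) => Bx.
    have gx : 0 <= g x by rewrite leNgt; apply/negP => H; apply: Ax.
    by rewrite fneg_of_ge0 //; ring.
  by rewrite (ind0 Bx); ring.
have ihg1 : Int (fun x => \1_(B m1) x * g x) by exact: Int_ind.
have ihg2 : Int (fun x => t * (\1_(~` B r) x * fneg g x)).
  by apply: Int_scale; apply: Int_ind => //; exact: Int_fneg.
have ihg : Int (fun x => h x * g x).
  by rewrite (funext eqhg); exact: Int_sub.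
have := G_use Gg Fh ihg.
rewrite (funext eqhg) RB // RZ; last by apply: Int_ind => //; exact: Int_fneg.
rewrite /RI; lra.
Qed.


Lemma pos_core (dist : X -> X -> R) (x0 : X) (m1 m2 : R) (alpha alphat : R -> R)
  (g : X -> R) (r c : R) :
  polish_borel dist -> 0 < m1 -> m1 <= m2 -> tail_function alpha -> tail_function alphat ->
  0 < fine (mu (cball dist x0 m1)) ->
  Gclass dist x0 mu m1 m2 alpha alphat g -> m2 <= r -> 0 <= c ->
  (forall a, r <= a -> fine (mu (~` cball dist x0 a)) <= c * alphat a) ->
  RI (~` cball dist x0 r) (fpos g) <=
    (c + fine (mu (~` cball dist x0 r))) / fine (mu (cball dist x0 m1))
      * RI (cball dist x0 m1) g.
Proof.
move=> pb m10 m12 [amon apos _] [tmon tpos _] p0 Gg hr c0 hc.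
set B := cball dist x0; set p := fine (mu (B m1)).
have pp : 0 < p := p0.
have mB a : measurable (B a) by exact: cball_meas.
have mBc a : measurable (~` B a) by apply: measurableC.
set M := fine (mu (~` B r)).
have M0 : 0 <= M by apply: fine_ge0; apply: measure_ge0.
have ig : Int g := L2_Int Gg.1.
have mg := Int_meas ig.
set A := ~` B r `&` [set x | 0 < g x].
have mA : measurable A by apply: measurableI => //; exact: meas_gt0.
have AB x : \1_A x <= \1_(~` B r) x :> R.
  case: (pselect (A x)) => Ax; first by rewrite (ind1 Ax) ind1 //; case: Ax.
  by rewrite (ind0 Ax); exact: (ind01 _ x).1.
apply: real_fin => //; first lra.
  by apply: Rge0 => x; apply: mulr_ge0; [exact: (ind01 _ x).1 | exact: fpos_ge0].
move=> t t0 tc.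
pose h := fun x => \1_(B m1) x - t * \1_A x.
have ih : Int h by apply: Int_sub; [exact: Int_indic | apply: Int_scale; exact: Int_indic].
have RIh : p - t * M <= RI setT h.
  rewrite RT /p /M -!RI_ind // -RZ; last exact: Int_indic.
  rewrite -RB; [|exact: Int_indic|by apply: Int_scale; exact: Int_indic].
  apply: Rle => //.
    by apply: Int_sub; [exact: Int_indic | apply: Int_scale; exact: Int_indic].
  by move=> x; rewrite /h; have := AB x; nra.
have Fh : Fclass dist x0 mu m1 m2 alpha alphat h.
  apply: (@Fclass_intro _ _ _ _ _ _ h (1 + t)) => //.
  - apply: measurable_funB; first exact/measurable_indicP.
    by apply: measurable_funM => //; exact/measurable_indicP.
  - move=> x; rewrite ler_norml /h; have := ind01 (B m1) x; have := ind01 A x.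
    move=> [? ?] [? ?]; apply/andP; split; nra.
  - move=> x Bx; rewrite /h (ind0 (D := A)); last first.
      by case=> H _; apply: H; apply: B_mono Bx.
    by rewrite mulr0 subr0; exact: (ind01 _ x).1.
  - move=> s hs.
    rewrite {1}/RI Rzero; last first.
      move=> x; case: (pselect (B s x)) => Bs.
        by rewrite (@ind0 (~` B s)) ?mul0r // => /(_ Bs).
      have nBm1 : ~ B m1 x by move=> H; apply: Bs; apply: B_mono H.
      rewrite fpos_of_le0 ?mulr0 // /h (ind0 nBm1) sub0r oppr_le0.
      by apply: mulr_ge0 => //; exact: (ind01 _ x).1.
    by apply: mulr_ge0; [apply: apos; lra | nra].
  - move=> s hs.
    have s0 : 0 < s by lra.
    apply: (@le_trans _ _ (t * fine (mu (~` B (Num.max r s))))).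
      rewrite -RI_ind // -RZ; last exact: Int_indic.
      apply: Rle.
      + by apply: Int_ind => //; exact: Int_fneg.
      + by apply: Int_scale; exact: Int_indic.
      move=> x; case: (pselect (B s x)) => Bs.
        rewrite (@ind0 (~` B s)); last by move=> /(_ Bs).
        by rewrite mul0r; have := ind01 (~` B (Num.max r s)) x; nra.
      rewrite ind1 // mul1r.
      have nBm1 : ~ B m1 x by move=> H; apply: Bs; apply: (@B_mono dist x0 m1 s x _ H); lra.
      have hle : h x <= 0.
        rewrite /h (ind0 nBm1) sub0r oppr_le0.
        by apply: mulr_ge0 => //; exact: (ind01 _ x).1.
      rewrite fneg_of_le0 // /h (ind0 nBm1) sub0r opprK.
      case: (pselect (A x)) => Ax.
        rewrite (ind1 Ax) mulr1 ind1 ?mulr1 //.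
        by apply: notB_max => //; case: Ax.
      rewrite (ind0 Ax) mulr0.
      by apply: mulr_ge0 => //; exact: (ind01 _ x).1.
    have rm : r <= Num.max r s by rewrite le_max lexx.
    have sm : s <= Num.max r s by rewrite le_max lexx orbT.
    have hmax := hc _ rm.
    have amax : alphat (Num.max r s) <= alphat s by apply: tmon.
    have am0 : 0 <= alphat (Num.max r s) by apply: tpos; lra.
    have e1 : t * fine (mu (~` B (Num.max r s))) <= t * (c * alphat (Num.max r s)).
      by apply: ler_wpM2l.
    have e2 : t * (c * alphat (Num.max r s)) <= t * c * alphat s.
      by rewrite mulrA; apply: ler_wpM2l => //; apply: mulr_ge0.
    have e3 : t * c * alphat s <= (p - t * M) * alphat s.
      by apply: ler_wpM2r => //; [apply: tpos; lra | nra].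
    have e4 : (p - t * M) * alphat s <= alphat s * RI setT h.
      by rewrite mulrC; apply: ler_wpM2l => //; apply: tpos; lra.
    lra.
have eqhg x : h x * g x = \1_(B m1) x * g x - t * (\1_(~` B r) x * fpos g x).
  rewrite /h; case: (pselect (A x)) => Ax.
    rewrite (ind1 Ax); case: Ax => Ax1 Ax2.
    rewrite (ind1 Ax1) fpos_of_ge0 //; last by apply: ltW.
    by ring.
  rewrite (ind0 Ax).
  case: (pselect ((~` B r) x)) => Bx.
    have gx : g x <= 0 by rewrite leNgt; apply/negP => H; apply: Ax.
    by rewrite fpos_of_le0 //; ring.
  by rewrite (ind0 Bx); ring.
have ihg1 : Int (fun x => \1_(B m1) x * g x) by exact: Int_ind.
have ihg2 : Int (fun x => t * (\1_(~` B r) x * fpos g x)).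
  by apply: Int_scale; apply: Int_ind => //; exact: Int_fpos.
have ihg : Int (fun x => h x * g x).
  by rewrite (funext eqhg); exact: Int_sub.
have := G_use Gg Fh ihg.
rewrite (funext eqhg) RB // RZ; last by apply: Int_ind => //; exact: Int_fpos.
rewrite /RI; lra.
Qed.


Lemma bt_extract (dist : X -> X -> R) (x0 : X) (m1 : R) (alpha : R -> R) (r : R) :
  polish_borel dist ->
  0 < fine (mu (cball dist x0 m1)) -> (forall a, 0 < a -> 0 < alpha a) -> 0 < r ->
  (betat dist x0 mu m1 alpha r < +oo)%E ->
  exists c, [/\ 0 <= c, betat dist x0 mu m1 alpha r = (c / fine (mu (cball dist x0 m1)))%:E &
     forall a, r <= a -> fine (mu (~` cball dist x0 a)) <= c * alpha a].
Proof.
move=> pb p0 apos r0.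
set p := fine (mu (cball dist x0 m1)).
have pp : 0 < p := p0.
rewrite /betat.
set S := [set y | _].
have mBc a : measurable (~` cball dist x0 a) by apply: measurableC; exact: cball_meas.
have mpos a : r <= a -> 0 < Num.min (alpha a) 1.
  by move=> ra; rewrite lt_min ltr01 andbT; apply: apos; lra.
have Sy a : r <= a -> S (equot (mu (~` cball dist x0 a)) (Num.min (alpha a) 1)).
  by move=> ra; exists a.
have eqS a : r <= a -> equot (mu (~` cball dist x0 a)) (Num.min (alpha a) 1) =
    (fine (mu (~` cball dist x0 a)) / Num.min (alpha a) 1)%:E.
  by move=> ra; rewrite /equot gt_eqF ?mpos // (muE (mBc a)) -EFinM.
have E0 : (0 <= ereal_sup S)%E.
  apply: le_trans (ereal_sup_ubound (Sy r (lexx r))).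
  rewrite eqS // lee_fin; apply: divr_ge0; last exact: ltW (mpos r (lexx r)).
  by apply: fine_ge0; apply: measure_ge0.
case E: (ereal_sup S) E0 => [e| |] // E0.
- move=> _; exists e; split.
  + by rewrite -lee_fin.
  + by rewrite -EFinM mulrC.
  + move=> a ra; have := ereal_sup_ubound (Sy a ra); rewrite E eqS // lee_fin.
    rewrite ler_pdivrMr ?mpos // => H; apply: le_trans H _.
    apply: ler_wpM2l; first by rewrite -lee_fin.
    by rewrite ge_min lexx.
- by rewrite mulry gtr0_sg ?invr_gt0 // mul1e ltxx.
Qed.

Lemma b_extract (dist : X -> X -> R) (x0 : X) (m1 : R) (alphat : R -> R) (r : R) :
  polish_borel dist ->
  0 < fine (mu (cball dist x0 m1)) -> (forall a, 0 < a -> 0 <= alphat a) -> 0 < r ->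
  (beta dist x0 mu m1 alphat r < +oo)%E ->
  exists c, [/\ 0 <= c, beta dist x0 mu m1 alphat r =
        ((c + fine (mu (~` cball dist x0 r))) / fine (mu (cball dist x0 m1)))%:E &
     forall a, r <= a -> fine (mu (~` cball dist x0 a)) <= c * alphat a].
Proof.
move=> pb p0 tpos r0.
set p := fine (mu (cball dist x0 m1)).
have pp : 0 < p := p0.
rewrite /beta.
set S := [set y | _].
have mBc a : measurable (~` cball dist x0 a) by apply: measurableC; exact: cball_meas.
have Sy a : r <= a -> S (equot (mu (~` cball dist x0 a)) (alphat a)).
  by move=> ra; exists a.
have Sge0 a : r <= a -> (0 <= equot (mu (~` cball dist x0 a)) (alphat a))%E.
  move=> ra; rewrite /equot; case: ifP => _.
    by case: ifP => _ //; rewrite leey.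
  apply: mule_ge0; first exact: measure_ge0.
  by rewrite lee_fin invr_ge0; apply: tpos; lra.
have E0 : (0 <= ereal_sup S)%E by apply: le_trans (Sge0 r (lexx r)) (ereal_sup_ubound (Sy r (lexx r))).
set M := fine (mu (~` cball dist x0 r)).
have HM : (mu : {measure set X -> \bar R}) (~` cball dist x0 r) = M%:E by rewrite /M -muE.
rewrite HM.
case E: (ereal_sup S) E0 => [e| |] // E0.
- move=> _; exists e; split.
  + by rewrite -lee_fin.
  + by rewrite -EFinD -EFinM mulrC.
  + move=> a ra; have := ereal_sup_ubound (Sy a ra); rewrite E /equot.
    have ta : 0 <= alphat a by apply: tpos; lra.
    case: eqP => [t0|/eqP t0].
      case: eqP => [m0 _|_]; last by rewrite leNgt ltey.
      by rewrite m0 t0 /= mulr0.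
    rewrite (muE (mBc a)) -EFinM lee_fin.
    have tp : 0 < alphat a by rewrite lt_neqAle eq_sym t0.
    by rewrite ler_pdivrMr.
- by rewrite addye // mulry gtr0_sg ?invr_gt0 // mul1e ltxx.
Qed.


Lemma negB_core (dist : X -> X -> R) (x0 : X) (m1 m2 : R) (alpha alphat : R -> R)
  (g : X -> R) :
  polish_borel dist -> 0 < m1 -> m1 <= m2 -> tail_function alpha -> tail_function alphat ->
  Gclass dist x0 mu m1 m2 alpha alphat g ->
  RI (cball dist x0 m1) (fneg g) <= 0.
Proof.
move=> pb m10 m12 [amon apos _] [tmon tpos _] Gg.
set B := cball dist x0.
have mB a : measurable (B a) by exact: cball_meas.
have ig : Int g := L2_Int Gg.1.
have mg := Int_meas ig.
set A := B m1 `&` [set x | g x < 0].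
have mA : measurable A by apply: measurableI => //; exact: meas_lt0.
pose h := \1_A : X -> R.
have RIh : 0 <= RI setT h by rewrite RT; apply: Rge0 => x; exact: (ind01 _ x).1.
have Fh : Fclass dist x0 mu m1 m2 alpha alphat h.
  apply: (@Fclass_intro _ _ _ _ _ _ h 1) => //.
  - exact/measurable_indicP.
  - by move=> x; rewrite ger0_norm; have := ind01 A x; case.
  - move=> s hs.
    rewrite {1}/RI Rzero; last first.
      move=> x; case: (pselect (B s x)) => Bs.
        by rewrite (@ind0 (~` B s)) ?mul0r // => /(_ Bs).
      have nA : ~ A x by case=> H _; apply: Bs; apply: B_mono H.
      by rewrite fpos_of_le0 ?mulr0 // /h (ind0 nA).
    by apply: mulr_ge0 => //; apply: apos; lra.
  - move=> s hs.
    rewrite {1}/RI Rzero; last first.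
      by move=> x; rewrite fneg_of_ge0 ?mulr0 //; exact: (ind01 _ x).1.
    by apply: mulr_ge0 => //; apply: tpos; lra.
have eqhg x : h x * g x = -1 * (\1_(B m1) x * fneg g x).
  rewrite /h; case: (pselect (A x)) => Ax.
    rewrite (ind1 Ax); case: Ax => Ax1 Ax2.
    rewrite (ind1 Ax1) fneg_of_le0 //; last by apply: ltW.
    by ring.
  rewrite (ind0 Ax).
  case: (pselect (B m1 x)) => Bx.
    have gx : 0 <= g x by rewrite leNgt; apply/negP => H; apply: Ax.
    by rewrite fneg_of_ge0 //; ring.
  by rewrite (ind0 Bx); ring.
have ihg1 : Int (fun x => \1_(B m1) x * fneg g x) by apply: Int_ind => //; exact: Int_fneg.
have ihg : Int (fun x => h x * g x).
  by rewrite (funext eqhg); exact: Int_scale.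
have := G_use Gg Fh ihg.
rewrite (funext eqhg) RZ //.
rewrite /RI; lra.
Qed.


Lemma Int_abs (h : X -> R) : Int h -> Int (fun x => `|h x|).
Proof.
move=> ih; rewrite (funext (fabs h)); apply: Int_add.
  exact: Int_fpos.
exact: Int_fneg.
Qed.

Lemma RI_split (D : set X) (h : X -> R) : measurable D -> Int h ->
  RI setT h = RI D h + RI (~` D) h.
Proof.
move=> mD ih; rewrite /RI -RD; [|exact: Int_ind|by apply: Int_ind => //; apply: measurableC].
apply: Rext => x; rewrite ind1 //.
case: (pselect (D x)) => Dx.
  rewrite (ind1 Dx) (@ind0 (~` D) x); last by move=> /(_ Dx).
  by rewrite mul0r addr0.
by rewrite (ind0 Dx) (@ind1 (~` D)) // mul0r add0r.
Qed.

Lemma RI_abs (D : set X) (h : X -> R) : measurable D -> Int h ->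
  RI D (fun x => `|h x|) = RI D (fpos h) + RI D (fneg h).
Proof.
move=> mD ih; rewrite /RI -RD; [|by apply: Int_ind => //; exact: Int_fpos
  |by apply: Int_ind => //; exact: Int_fneg].
by apply: Rext => x; rewrite fabs mulrDr.
Qed.

Lemma RI_abs2 (D : set X) (h : X -> R) : measurable D -> Int h ->
  RI D (fun x => `|h x|) = RI D h + 2 * RI D (fneg h).
Proof.
move=> mD ih; rewrite /RI -RZ; last by apply: Int_ind => //; exact: Int_fneg.
rewrite -RD; [|exact: Int_ind|by apply: Int_scale; apply: Int_ind => //; exact: Int_fneg].
apply: Rext => x; rewrite fabs; have := fposneg h x; move=> E.
by rewrite [in RHS]E; ring.
Qed.

Lemma RI_neglow (D : set X) (h : X -> R) : measurable D -> Int h ->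
  - RI D (fneg h) <= RI D h.
Proof.
move=> mD ih; rewrite /RI -mulN1r -RZ; last by apply: Int_ind => //; exact: Int_fneg.
apply: Rle; [by apply: Int_scale; apply: Int_ind => //; exact: Int_fneg
  |exact: Int_ind|].
move=> x; have := fposneg h x; have := fpos_ge0 h x; have := ind01 D x; nra.
Qed.

End H.

Unset Implicit Arguments. Set Strict Implicit.
Local Open Scope ereal_scope.

Theorem lemma3p4 (R : realType) (d : measure_display) (X : measurableType d)
  (dist : X -> X -> R) (x0 : X) (mu : probability X R) (m1 m2 : R)
  (alpha alphat : R -> R) :
  polish_borel dist ->
  (0 < m1)%R -> (m1 <= m2)%R ->
  tail_function alpha -> tail_function alphat ->
  0 < mu (cball dist x0 m1) ->
  (forall r : R, (0 < r)%R -> (0 < alpha r)%R) ->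
  let B := cball dist x0 in
  let bt := betat dist x0 mu m1 alpha in
  let b := beta dist x0 mu m1 alphat in
  (* (i) *)
  (forall g, Gclass dist x0 mu m1 m2 alpha alphat g ->
     (forall r, (m1 <= r)%R -> bt r < +oo ->
        eint mu (~` B r) (fneg g) <= bt r * eint mu (B m1) g) /\
     (forall r, (m2 <= r)%R -> b r < +oo ->
        eint mu (~` B r) (fpos g) <= b r * eint mu (B m1) g)) /\
  (* (ii), f part *)
  (forall f, Fnorm dist x0 mu m1 m2 alpha alphat f ->
     (forall r, (m2 <= r)%R ->
        eint mu (~` B r) (fun x => `|f x|%R) <= (alpha r + alphat r)%:E) /\
     eint mu setT (fun x => `|f x|%R) <= (1 + 2 * alphat m2)%:E) /\
  (* (ii), g part *)
  (forall g, Gnorm dist x0 mu m1 m2 alpha alphat g ->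
     bt m1 < 1 ->
     (forall r, (m2 <= r)%R ->
        eint mu (~` B r) (fun x => `|g x|%R)
          <= (bt r + b r) * ((1 - fine (bt m1))^-1)%:E) /\
     eint mu setT (fun x => `|g x|%R)
       <= (1 + 2 * (fine (bt m1) / (1 - fine (bt m1))))%:E).
Proof.
move=> pb m10 m12 ta tt mup apos B bt b.
have [amon apos' _] := ta; have [tmon tpos _] := tt.
have mB a : measurable (B a) by exact: cball_meas.
have mBc a : measurable (~` B a) by apply: measurableC.
have p0 : (0 < fine (mu (cball dist x0 m1)))%R.
  by move: mup; rewrite (muE mu (mB m1)) lte_fin.
have btmono r : (m1 <= r)%R -> bt r <= bt m1.
  move=> hr; rewrite /bt /betat; apply: lee_wpmul2l.
    by rewrite lee_fin invr_ge0 ltW.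
  apply: ereal_sup_le => y [a ra ->]; exists a => //; lra.
split; [|split].
- move=> g Gg; have ig := L2_Int Gg.1; split.
  + move=> r hr btr.
    have [c [c0 Hbt Hc]] := bt_extract pb p0 apos (lt_le_trans m10 hr) btr.
    rewrite /bt Hbt !eint_RI //; last exact: Int_fneg.
    by rewrite -EFinM lee_fin; apply: (neg_core pb m10 m12 ta tt p0 Gg hr c0 Hc).
  + move=> r hr br.
    have [c [c0 Hb Hc]] := b_extract pb p0 (fun a a0 => tpos a a0) (lt_le_trans m10 (le_trans m12 hr)) br.
    rewrite /b Hb !eint_RI //; last exact: Int_fpos.
    by rewrite -EFinM lee_fin; apply: (pos_core pb m10 m12 ta tt p0 Gg hr c0 Hc).
- move=> f [Ff f1]; have [L2f aef H1 H2] := Ff; have If := L2_Int L2f.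
  have RIf1 : RI mu setT f = 1%R by move: f1; rewrite eint_RI // => -[].
  split.
  + move=> r hr; rewrite eint_RI //; last exact: Int_abs.
    rewrite RI_abs // lee_fin.
    have h1 := H1 r (le_trans m12 hr); rewrite !eint_RI // in h1; last exact: Int_fpos.
    rewrite -EFinM lee_fin RIf1 mulr1 in h1.
    have h2 := H2 r hr; rewrite !eint_RI // in h2; last exact: Int_fneg.
    rewrite -EFinM lee_fin RIf1 mulr1 in h2.
    lra.
  + rewrite eint_RI //; last exact: Int_abs.
    rewrite RI_abs2 // RIf1 lee_fin.
    have eqae : RI mu setT (fneg f) = RI mu (~` B m2) (fneg f).
      rewrite /RI /Rintegral; congr fine.
      apply: ae_eq_integral => //.
      * apply/measurable_EFinP; apply: (@Int_meas _ _ _ mu); apply: Int_ind => //; exact: Int_fneg.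
      * apply/measurable_EFinP; apply: (@Int_meas _ _ _ mu); apply: Int_ind => //; exact: Int_fneg.
      * apply: filterS aef => x Hx _ /=; congr EFin.
        case: (pselect (B m2 x)) => Bx.
          by rewrite fneg_of_ge0 ?mulr0 //; exact: Hx.
        by rewrite ind1 // ind1.
    have h2 := H2 m2 (lexx m2); rewrite !eint_RI // in h2; last exact: Int_fneg.
    rewrite -EFinM lee_fin RIf1 mulr1 in h2.
    rewrite eqae; lra.
- move=> g [Gg g1] bt1; have ig := L2_Int Gg.1.
  have RIg1 : RI mu setT g = 1%R by move: g1; rewrite eint_RI // => -[].
  have btf : bt m1 < +oo by apply: lt_trans bt1 _; rewrite ltry.
  have [c1 [c10 Hbt1 Hc1]] := bt_extract pb p0 apos m10 btf.
  have fq : fine (bt m1) = (c1 / fine (mu (cball dist x0 m1)))%R by rewrite /bt Hbt1.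
  have q1 : (c1 / fine (mu (cball dist x0 m1)) < 1)%R by move: bt1; rewrite /bt Hbt1 lte_fin.
  have q0 : (0 <= c1 / fine (mu (cball dist x0 m1)))%R by apply: divr_ge0 => //; exact: ltW.
  have hN := neg_core pb m10 m12 ta tt p0 Gg (lexx m1) c10 Hc1.
  have hB := negB_core pb m10 m12 ta tt Gg.
  have hJ0 : (0 <= RI mu (B m1) g)%R by have := RI_neglow (mB m1) ig; lra.
  have hsplit := RI_split (mB m1) ig.
  have hlow := RI_neglow (mBc m1) ig.
  have hNge0 : (0 <= RI mu (~` B m1) (fneg g))%R.
    by apply: Rge0 => x; apply: mulr_ge0; [exact: (ind01 _ x).1 | exact: fneg_ge0].
  have hJq : (RI mu (B m1) g <= (1 - c1 / fine (mu (cball dist x0 m1)))^-1)%R.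
    rewrite -[X in (_ <= X)%R]mul1r ler_pdivlMr ?subr_gt0 //.
    nra.
  split.
  + move=> r hr; rewrite eint_RI //; last exact: Int_abs.
    rewrite RI_abs //.
    have hr1 : (m1 <= r)%R by lra.
    have btr : bt r < +oo by apply: le_lt_trans (btmono r hr1) btf.
    have [c [c0 Hbt Hc]] := bt_extract pb p0 apos (lt_le_trans m10 hr1) btr.
    have hneg := neg_core pb m10 m12 ta tt p0 Gg hr1 c0 Hc.
    have [brf|brinf] := boolP (b r < +oo).
    * have [c' [c0' Hb Hc']] := b_extract pb p0 (fun a a0 => tpos a a0)
         (lt_le_trans m10 (le_trans m12 hr)) brf.
      have hpos := pos_core pb m10 m12 ta tt p0 Gg hr c0' Hc'.
      rewrite /bt /b Hbt Hb -EFinD -EFinM lee_fin.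
      have a10 : (0 <= c / fine (mu (cball dist x0 m1)))%R by apply: divr_ge0 => //; exact: ltW.
      have M0 : (0 <= fine (mu (~` cball dist x0 r)))%R by apply: fine_ge0; apply: measure_ge0.
      have a20 : (0 <= (c' + fine (mu (~` cball dist x0 r))) / fine (mu (cball dist x0 m1)))%R.
        by apply: divr_ge0; [lra | exact: ltW].
      apply: le_trans (_ : _ <= (c / fine (mu (cball dist x0 m1)) +
         (c' + fine (mu (~` cball dist x0 r))) / fine (mu (cball dist x0 m1))) *
         RI mu (B m1) g)%R _.
        by rewrite mulrDl; lra.
      apply: ler_wpM2l; [lra | by move: hJq; rewrite -fq].
    * have brE : b r = +oo by apply/eqP; move: brinf; rewrite ltey negbK.
      rewrite brE /bt Hbt addey // mulyr gtr0_sg; first by rewrite mul1e leey.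
      by rewrite invr_gt0 subr_gt0; move: q1; rewrite -fq.
  + rewrite eint_RI //; last exact: Int_abs.
    rewrite RI_abs2 // RIg1 fq lee_fin.
    have hs2 := RI_split (mB m1) (Int_fneg ig).
    have : (c1 / fine (mu (cball dist x0 m1)) * RI mu (B m1) g <=
            c1 / fine (mu (cball dist x0 m1)) / (1 - c1 / fine (mu (cball dist x0 m1))))%R.
      by apply: ler_wpM2l.
    lra.
Qed.
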